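(* Let $(\mathcal{A},e)$ be an order-unit space and $L$ a closed Lip-norm on $\mathcal{A}$. Let $\mathcal{K}=\{\tilde a\in\mathcal{A}/\mathbb{R}e: \tilde L(\tilde a)\le1\}$ and let $Af_0(\mathcal{K})$ be the Banach space of $\|\cdot\|^{\sim}$-continuous affine real functions on $\mathcal{K}$ vanishing at $0$, with the supremum norm. Each $\lambda\in\mathcal{A}'^0=\{\lambda\in\mathcal{A}':\lambda(e)=0\}$ defines a function $\tilde a\mapsto\lambda(a)$ on $\mathcal{K}$ belonging to $Af_0(\mathcal{K})$; the set of functions so obtained is dense in $Af_0(\mathcal{K})$ for the supremum norm.
   Context: An order-unit space is a real partially ordered vector space $\mathcal{A}$ with distinguished $e$ such that (i) for each $a$ there is $r$ with $a\le re$, and (ii) if $a\le re$ for all $r>0$ then $a\le0$; norm $\|a\|=\inf\{r\ge0:-re\le a\le re\}$ (not necessarily complete), with Banach dual $\mathcal{A}'$. $\|\tilde a\|^{\sim}=\inf_t\|a+te\|$ is the quotient norm on $\mathcal{A}/\mathbb{R}e$, and $\tilde L(\tilde a)=L(a)$. A Lip-norm is a finite-valued seminorm $L$ on $\mathcal{A}$ with: (1) $L(a)=0$ iff $a\in\mathbb{R}e$; (2) $\{a:L(a)\le1\}$ is norm-closed; (3) the image of $\{a:L(a)\le1\}$ in $\mathcal{A}/\mathbb{R}e$ is totally bounded for $\|\cdot\|^{\sim}$. $L$ is closed if $\{a:L(a)\le1\}$ is complete for the norm metric. *)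

(* Defs.v *)
From HB Require Import structures.
From mathcomp Require Import all_boot all_order all_algebra.
From mathcomp Require Import boolp classical_sets reals.
Set Implicit Arguments. Unset Strict Implicit. Unset Printing Implicit Defensive.
Import Order.TTheory GRing.Theory Num.Theory.
Local Open Scope ring_scope.
Local Open Scope classical_set_scope.

Section OrderUnit.
Variables (R : realType) (A : lmodType R).

Definition is_partially_ordered_vs (le : A -> A -> Prop) : Prop :=
  [/\ forall a, le a a,
      forall a b, le a b -> le b a -> a = b,
      forall a b c, le a b -> le b c -> le a c,
      forall a b c, le a b -> le (a + c) (b + c) &
      forall a b (s : R), le a b -> 0 <= s -> le (s *: a) (s *: b)].

Definition is_order_unit_space (le : A -> A -> Prop) (e : A) : Prop :=
  [/\ is_partially_ordered_vs le,
      forall a, exists r : R, le a (r *: e) &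
      forall a, (forall r : R, 0 < r -> le a (r *: e)) -> le a 0].

Definition ou_norm (le : A -> A -> Prop) (e : A) (a : A) : R :=
  inf [set r : R | 0 <= r /\ le (- (r *: e)) a /\ le a (r *: e)].

(* quotient norm on A / Re, computed on a representative: inf_t ||a + t e|| *)
Definition q_norm (le : A -> A -> Prop) (e : A) (a : A) : R :=
  inf [set ou_norm le e (a + t *: e) | t in [set: R]].

Definition in_dual (le : A -> A -> Prop) (e : A) (lam : A -> R) : Prop :=
  (forall (s : R) a b, lam (s *: a + b) = s * lam a + lam b) /\
  exists C : R, forall a, `|lam a| <= C * ou_norm le e a.

Definition is_seminorm (L : A -> R) : Prop :=
  (forall a b, L (a + b) <= L a + L b) /\
  (forall (s : R) a, L (s *: a) = `|s| * L a).

Definition is_lip_norm (le : A -> A -> Prop) (e : A) (L : A -> R) : Prop :=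
  [/\ is_seminorm L,
      (forall a, L a = 0 <-> exists t : R, a = t *: e),
      (forall a, (forall eps : R, 0 < eps ->
                   exists b, L b <= 1 /\ ou_norm le e (a - b) < eps) -> L a <= 1) &
      (forall eps : R, 0 < eps -> exists s : seq A,
          forall a, L a <= 1 -> exists2 b, b \in s & q_norm le e (a - b) < eps)].

Definition is_closed_lip_norm (le : A -> A -> Prop) (e : A) (L : A -> R) : Prop :=
  is_lip_norm le e L /\
  forall u : nat -> A, (forall n, L (u n) <= 1) ->
    (forall eps : R, 0 < eps -> exists N : nat, forall m n : nat,
        (N <= m)%N -> (N <= n)%N -> ou_norm le e (u m - u n) < eps) ->
    exists2 a, L a <= 1 & forall eps : R, 0 < eps -> exists N : nat,
        forall n : nat, (N <= n)%N -> ou_norm le e (u n - a) < eps.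

(* f : A -> R represents an element of Af_0(K), K = {a~ : L~(a~) <= 1}:
   it is well defined on classes of A/Re (within K), affine on K,
   vanishes at 0 and is continuous on K for the quotient norm. Only the
   values of f on {a : L a <= 1} matter. *)
Definition in_Af0K (le : A -> A -> Prop) (e : A) (L : A -> R) (f : A -> R) : Prop :=
  [/\ (forall a (t : R), L a <= 1 -> f (a + t *: e) = f a),
      (forall a b (s : R), L a <= 1 -> L b <= 1 -> 0 <= s <= 1 ->
          f (s *: a + (1 - s) *: b) = s * f a + (1 - s) * f b),
      f 0 = 0 &
      (forall a, L a <= 1 -> forall eps : R, 0 < eps ->
          exists2 del : R, 0 < del & forall b, L b <= 1 ->
             q_norm le e (b - a) < del -> `|f b - f a| < eps)].

End OrderUnit.

(* Main.v *)
Require Import Defs.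
From HB Require Import structures.
From mathcomp Require Import all_boot all_order all_algebra.
From mathcomp Require Import boolp classical_sets reals.
From mathcomp Require Import lra ring.
Import Order.TTheory GRing.Theory Num.Theory.
Local Open Scope ring_scope.
Local Open Scope classical_set_scope.

Section HBsec.
Variables (R : realType) (A : lmodType R).

Definition sublin (q : A -> R) :=
  (forall x y, q (x + y) <= q x + q y) /\
  (forall (s : R) x, 0 < s -> q (s *: x) <= s * q x).

Lemma sublin0 q : sublin q -> q 0 = 0.
Proof.
move=> [hs hh].
have h1 := hs 0 0; rewrite addr0 in h1.
have h2 := hh (2^-1) 0 ltac:(by rewrite invr_gt0); rewrite scaler0 in h2.
lra.
Qed.

Lemma sublinN q x : sublin q -> 0 <= q x + q (- x).
Proof.
move=> sq; have := sq.1 x (- x); rewrite subrr (@sublin0 _ sq) //.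
Qed.

Lemma sublin_eq q (t : R) x : sublin q -> 0 <= t -> q (t *: x) = t * q x.
Proof.
move=> sq; rewrite le_eqVlt => /orP[/eqP <-|tp].
  by rewrite scale0r mul0r (@sublin0 _ sq).
apply/eqP; rewrite eq_le sq.2 //=.
have := sq.2 t^-1 (t *: x) ltac:(by rewrite invr_gt0).
rewrite scalerA mulVf ?gt_eqF // scale1r => h.
by rewrite -ler_pdivlMl // mulrC.
Qed.

Lemma inf2 (E1 E2 : set R) z : E1 !=set0 -> E2 !=set0 ->
  (forall a b, E1 a -> E2 b -> z <= a + b) -> z <= inf E1 + inf E2.
Proof.
move=> n1 n2 h.
have h1 : forall b, E2 b -> z - b <= inf E1.
  move=> b Eb; apply: lb_le_inf => // a Ea; have := h a b Ea Eb; lra.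
suff : z - inf E1 <= inf E2 by lra.
apply: lb_le_inf => // b Eb; have := h1 b Eb; lra.
Qed.

Lemma inf_scal (E : set R) (s z : R) : E !=set0 -> 0 < s ->
  (forall a, E a -> z <= s * a) -> z <= s * inf E.
Proof.
move=> n sp h.
have : z / s <= inf E.
  apply: lb_le_inf => // a Ea; rewrite ler_pdivrMr // mulrC; exact: h.
by rewrite ler_pdivrMr // mulrC.
Qed.

Lemma hahn_banach (p : A -> R) : sublin p -> exists lam : A -> R,
  [/\ (forall x y, lam (x + y) = lam x + lam y),
      (forall (s : R) x, lam (s *: x) = s * lam x) &
      (forall x, lam x <= p x)].
Proof.
move=> sp.
pose T := {q : A -> R | sublin q /\ forall x, q x <= p x}.
pose Rl := fun (q1 q2 : T) => `[< forall x, sval q2 x <= sval q1 x >].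
have t0 : T := exist _ p (conj sp (fun x => lexx _)).
have [[q [sq qp]] qmax] : exists t, premaximal Rl t.
  apply: (ZL_preorder t0).
  - by move=> t; apply/asboolP => x.
  - move=> r s t /asboolP h1 /asboolP h2; apply/asboolP => x.
    exact: le_trans (h2 x) (h1 x).
  move=> C Ctot.
  have [[q0 Cq0]|nC] := pselect (exists q, C q); last first.
    by exists t0 => q Cq; exfalso; apply: nC; exists q.
  pose E x := [set sval q x | q in C].
  pose m x := inf (E x).
  have En x : E x !=set0 by exists (sval q0 x); exists q0.
  have El x : has_lbound (E x).
    exists (Num.min (sval q0 x) (- sval q0 (- x))) => _ [q Cq <-].
    have [/asboolP h|/asboolP h] := Ctot q q0 Cq Cq0.
      by rewrite ge_min h.
    rewrite ge_min; apply/orP; right.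
    have := @sublinN _ x (proj1 (proj2_sig q)); have := h (- x); lra.
  have mle q x : C q -> m x <= sval q x.
    by move=> Cq; apply: ge_inf => //; exists q.
  have msub : sublin m.
    split.
      move=> x y; apply: inf2 => // _ _ [q1 C1 <-] [q2 C2 <-].
      have [/asboolP h|/asboolP h] := Ctot q1 q2 C1 C2.
        have := (proj1 (proj1 (proj2_sig q2))) x y; have := h x.
        have := mle q2 (x + y) C2; lra.
      have := (proj1 (proj1 (proj2_sig q1))) x y; have := h y.
      have := mle q1 (x + y) C1; lra.
    move=> s x s0; apply: inf_scal => // _ [q Cq <-].
    exact: le_trans (mle q _ Cq) ((proj2 (proj1 (proj2_sig q))) s x s0).
  have mp x : m x <= p x by apply: le_trans (mle q0 x Cq0) ((proj2 (proj2_sig q0)) x).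
  exists (exist _ m (conj msub mp)) => q Cq; apply/asboolP => x /=.
  exact: mle.
have key y : forall x (t : R), 0 <= t -> q x <= q (x + t *: y) - t * q y.
  pose E x := [set q (x + t *: y) - t * q y | t in [set t : R | 0 <= t]].
  pose qy x := inf (E x).
  have En x : E x !=set0 by exists (q (x + 0 *: y) - 0 * q y); exists 0; rewrite /= ?lexx.
  have El x : has_lbound (E x).
    exists (- q (- x)) => _ [s s0 <-].
    have := sq.1 (x + s *: y) (- x).
    rewrite addrC addKr (@sublin_eq _ _ _ sq s0); lra.
  have qyle x s : 0 <= s -> qy x <= q (x + s *: y) - s * q y.
    by move=> s0; apply: ge_inf => //; exists s.
  have qyq x : qy x <= q x.
    by have := qyle x 0 (lexx _); rewrite scale0r addr0 mul0r subr0.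
  have qysub : sublin qy.
    split.
      move=> x1 x2; apply: inf2 => // _ _ [t1 t1p <-] [t2 t2p <-].
      have t12 : 0 <= t1 + t2 by rewrite addr_ge0.
      have := qyle (x1 + x2) _ t12.
      have -> : x1 + x2 + (t1 + t2) *: y = (x1 + t1 *: y) + (x2 + t2 *: y).
        by rewrite scalerDl addrACA.
      have := sq.1 (x1 + t1 *: y) (x2 + t2 *: y); lra.
    move=> s x s0; apply: inf_scal => // _ [t1 t1p <-].
    have st : 0 <= s * t1 by rewrite mulr_ge0 // ltW.
    have := qyle (s *: x) _ st.
    rewrite -scalerA -scalerDr (@sublin_eq _ _ _ sq (ltW s0)).
    by rewrite mulrBr mulrA.
  have qyp x : qy x <= p x := le_trans (qyq x) (qp x).
  have := qmax (exist _ qy (conj qysub qyp)).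
  move=> /(_ (asboolT (fun x => qyq x))) /asboolP /= h x t t0p.
  exact: le_trans (h x) (qyle x t t0p).
have qN y : q (- y) = - q y.
  have := key y (- y) 1 ler01; rewrite scale1r addNr (@sublin0 _ sq) mul1r.
  have := @sublinN _ y sq; lra.
have qD x y : q (x + y) = q x + q y.
  apply/eqP; rewrite eq_le sq.1 /=.
  have := key y x 1 ler01; rewrite scale1r mul1r; lra.
exists q; split => // s x.
have [s0|s0] := leP 0 s; first exact: sublin_eq.
have sN : 0 <= - s by rewrite oppr_ge0 ltW.
have := @sublin_eq _ _ x sq sN.
rewrite scaleNr qN => h; lra.
Qed.

End HBsec.
Arguments sublin {R A}.
Arguments sublin0 {R A q}.
Arguments sublin_eq {R A q}.
Arguments sublinN {R A q}.
Arguments inf2 {R}.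
Arguments inf_scal {R}.
Arguments hahn_banach {R A}.


Section OuSec.
Variables (R : realType) (A : lmodType R).

Definition Sset (le : A -> A -> Prop) (e a : A) : set R :=
  [set r : R | 0 <= r /\ le (- (r *: e)) a /\ le a (r *: e)].

Lemma ou_ge0 (le : A -> A -> Prop) (e a : A) : 0 <= ou_norm le e a.
Proof.
rewrite /ou_norm; have [ne|ne] := pselect ([set r : R | 0 <= r /\ le (- (r *: e)) a /\ le a (r *: e)] !=set0).
  by apply: lb_le_inf => // r [].
by rewrite inf_out // => -[].
Qed.

Lemma ou_elem (le : A -> A -> Prop) (e a : A) (r : R) : Sset le e a r -> ou_norm le e a <= r.
Proof.
move=> h; apply: ge_inf => //; by exists 0 => x [].
Qed.

Lemma qn_le_ou (le : A -> A -> Prop) (e a : A) : q_norm le e a <= ou_norm le e a.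
Proof.
rewrite /q_norm; apply: ge_inf.
  by exists 0 => _ [t _ <-]; exact: ou_ge0.
by exists 0 => //; rewrite scale0r addr0.
Qed.

Lemma le_addP (le : A -> A -> Prop) : is_partially_ordered_vs le ->
  forall x y u v, le x y -> le u v -> le (x + u) (y + v).
Proof.
move=> [_ _ tr tl _] x y u v h1 h2.
apply: (tr _ (y + u)); first exact: tl.
rewrite (addrC y u) (addrC y v); exact: tl.
Qed.

Lemma le_negP (le : A -> A -> Prop) : is_partially_ordered_vs le ->
  forall x y, le x y -> le (- y) (- x).
Proof.
move=> [_ _ _ tl _] x y h.
have := tl _ _ (- x - y) h.
by rewrite addrA subrr add0r addrCA subrr addr0.
Qed.

Lemma ou_props (le : A -> A -> Prop) (e : A) : is_order_unit_space le e ->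
  sublin (ou_norm le e) /\ forall a, ou_norm le e (- a) <= ou_norm le e a.
Proof.
move=> [po un _]; have po' := po; case: po' => rf an tr tl sc.
have [e0|ne0] := pselect (le 0 e); last first.
  have z a : ou_norm le e a = 0.
    apply/eqP; rewrite eq_le ou_ge0 andbT.
    have [[r Sr]|nS] := pselect (Sset le e a !=set0); last first.
      by rewrite /ou_norm inf_out // => -[].
    have r0 : r = 0.
      case: Sr => r0 [h1 h2]; apply/eqP; rewrite eq_le r0 andbT.
      rewrite leNgt; apply/negP => rp; apply: ne0.
      have h3 := tr _ _ _ h1 h2.
      have := tl _ _ (r *: e) h3; rewrite addNr -scalerDl => h4.
      have := sc _ _ (r + r)^-1 h4 ltac:(by rewrite invr_ge0 ltW // addr_gt0).
      by rewrite scaler0 scalerA mulVf ?scale1r // gt_eqF // addr_gt0.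
    by rewrite -r0; exact: ou_elem.
  by split; [split|] => *; rewrite !z ?mulr0 ?addr0.
have Sne a : Sset le e a !=set0.
  have [r1 h1] := un a; have [r2 h2] := un (- a).
  have gen r0 r' : r0 <= r' -> le (r0 *: e) (r' *: e).
    move=> h; have := sc _ _ (r' - r0) e0; rewrite subr_ge0 scaler0 => /(_ h) h'.
    have := tl _ _ (r0 *: e) h'; by rewrite add0r -scalerDl subrK.
  exists (`|r1| + `|r2|); split; first by rewrite addr_ge0.
  split.
    have := le_negP _ po _ _ (tr _ _ _ h2 (gen _ _ (ler_wpDl (normr_ge0 r1) (ler_norm r2)))).
    by rewrite opprK.
  exact: tr _ _ _ h1 (gen _ _ (ler_wpDr (normr_ge0 r2) (ler_norm r1))).
split; first split.
- move=> a b; apply: inf2; try exact: Sne.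
  move=> r1 r2 [r10 [h1 h2]] [r20 [h3 h4]]; apply: ou_elem.
  split; first by rewrite addr_ge0.
  rewrite scalerDl opprD; split; exact: (le_addP _ po).
- move=> s a s0; apply: inf_scal => //; first exact: Sne.
  move=> r [r0 [h1 h2]]; apply: ou_elem.
  split; first by rewrite mulr_ge0 // ltW.
  have := sc _ _ s h1 (ltW s0); have := sc _ _ s h2 (ltW s0).
  by rewrite scalerN !scalerA.
- move=> a; apply: lb_le_inf; first exact: Sne.
  move=> r [r0 [h1 h2]]; apply: ou_elem; split => //; split.
    exact: (le_negP _ po).
  by have := le_negP _ po _ _ h1; rewrite opprK.
Qed.

End OuSec.
Arguments ou_props {R A le e}.
Arguments qn_le_ou {R A}.
Arguments ou_ge0 {R A}.


Theorem proposition5p3 (R : realType) (A : lmodType R)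
    (le : A -> A -> Prop) (e : A) (L : A -> R) :
  is_order_unit_space le e -> is_closed_lip_norm le e L ->
  (forall lam : A -> R, in_dual le e lam -> lam e = 0 -> in_Af0K le e L lam) /\
  (forall f : A -> R, in_Af0K le e L f -> forall eps : R, 0 < eps ->
     exists lam : A -> R, [/\ in_dual le e lam, lam e = 0 &
        forall a, L a <= 1 -> `|f a - lam a| <= eps]).
Proof.
move=> Hou [[[Lsub Lhom] Lker Lcl Ltb] Lcomp].
have [[ouD ouZ] ouN] := ou_props Hou.
have ousl : sublin (ou_norm le e) by [].
have ou0 : ou_norm le e 0 = 0 := sublin0 ousl.
have ouNe a : ou_norm le e (- a) = ou_norm le e a.
  by apply/eqP; rewrite eq_le ouN /=; have := ouN (- a); rewrite opprK.
have L0 : L 0 = 0 by have := Lhom 0 0; rewrite scale0r normr0 mul0r.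
have L01 : L 0 <= 1 by rewrite L0.
have LN a : L (- a) = L a by rewrite -scaleN1r Lhom normrN1 mul1r.
have Lsc a (t : R) : L a <= 1 -> 0 <= t <= 1 -> L (t *: a) <= 1.
  move=> La /andP[t0 t1]; rewrite Lhom ger0_norm //.
  have := ler_wpM2l t0 La; rewrite mulr1 => h; exact: le_trans h t1.
have Lconv a b (s : R) : L a <= 1 -> L b <= 1 -> 0 <= s <= 1 ->
    L (s *: a + (1 - s) *: b) <= 1.
  move=> La Lb /andP[s0 s1].
  have s1' : 0 <= 1 - s by rewrite subr_ge0.
  apply: le_trans (Lsub _ _) _; rewrite !Lhom !ger0_norm //.
  have := ler_wpM2l s0 La; have := ler_wpM2l s1' Lb; lra.
split.
  move=> lam [lin [C hC]] le0.
  have lam0 : lam 0 = 0 by have := lin 1 0 0; rewrite scale1r addr0 mul1r => h; lra.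
  have lamD x y : lam (x + y) = lam x + lam y by have := lin 1 x y; rewrite scale1r mul1r.
  have lamZ s x : lam (s *: x) = s * lam x by have := lin s x 0; rewrite addr0 lam0 addr0.
  have lamN x : lam (- x) = - lam x by rewrite -scaleN1r lamZ mulN1r.
  split.
  - by move=> a t _; rewrite addrC lamD lamZ le0 mulr0 add0r.
  - by move=> a b s _ _ _; rewrite lamD !lamZ.
  - exact: lam0.
  move=> a _ eps eps0.
  have C1 : 0 < `|C| + 1 by rewrite ltr_wpDl.
  exists (eps / (`|C| + 1)); first by rewrite divr_gt0.
  move=> b _ hb.
  have ne : [set ou_norm le e (b - a + t *: e) | t in [set: R]] !=set0.
    by exists (ou_norm le e (b - a + 0 *: e)); exists 0.
  have [_ [t _ <-] ht] := inf_lt ne hb.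
  have -> : lam b - lam a = lam (b - a + t *: e) by rewrite lamD lamZ le0 mulr0 addr0 lamD lamN.
  set o := ou_norm le e (b - a + t *: e) in ht *.
  have o0 : 0 <= o := ou_ge0 le e _.
  have h1 := hC (b - a + t *: e).
  have h2 : C * o <= `|C| * o by rewrite ler_wpM2r // ler_norm.
  have h3 : (`|C| + 1) * o < (`|C| + 1) * (eps / (`|C| + 1)) by rewrite ltr_pM2l.
  have h4 : (`|C| + 1) * (eps / (`|C| + 1)) = eps by rewrite mulrC divfK // gt_eqF.
  rewrite mulrDl mul1r in h3; lra.
move=> f [fwd faff f0 fcont] eps eps0.
have fN k : L k <= 1 -> f (- k) = - f k.
  move=> Lk.
  have h01 : 0 <= (2^-1 : R) <= 1 by apply/andP; split; lra.
  have := faff k (- k) (2^-1) Lk ltac:(by rewrite LN) h01.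
  have -> : (1 - 2^-1 : R) = 2^-1 by lra.
  rewrite scalerN addrN f0 => h; lra.
have ft k t : L k <= 1 -> 0 <= t <= 1 -> f (t *: k) = t * f k.
  move=> Lk ht; have := faff k 0 t Lk L01 ht.
  by rewrite scaler0 addr0 f0 mulr0 addr0.
have fe t : f (t *: e) = 0 by have := fwd 0 t L01; rewrite add0r f0.
have [del del0 hdel] := fcont 0 L01 eps eps0.
pose M := 2 * eps / del.
have M0 : 0 <= M by rewrite /M divr_ge0 // ?ltW // mulr_gt0.
have fb k : L k <= 1 -> - f k <= eps + M * ou_norm le e k.
  move=> Lk; set o := ou_norm le e k.
  have o0 : 0 <= o := ou_ge0 le e k.
  have Mo := mulr_ge0 M0 o0.
  have [olt|oge] := ltP o del.
    have hq : q_norm le e (k - 0) < del.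
      by rewrite subr0; exact: le_lt_trans (qn_le_ou le e k) olt.
    have := hdel k Lk hq; rewrite f0 subr0 => h.
    have h' : - f k <= `|f k| by rewrite -normrN ler_norm.
    lra.
  have op : 0 < o := lt_le_trans del0 oge.
  pose t := del / (2 * o).
  have t0 : 0 < t by rewrite divr_gt0 // mulr_gt0.
  have t1 : t <= 1 by rewrite /t ler_pdivrMr ?mulr_gt0 // mul1r; lra.
  have t01 : 0 <= t <= 1 by rewrite t1 ltW.
  have Ltk : L (t *: k) <= 1 := Lsc k t Lk t01.
  have otk : ou_norm le e (t *: k) = t * o := sublin_eq _ _ ousl (ltW t0).
  have tod : t * o = del / 2.
    have o0' : o != 0 by rewrite gt_eqF.
    rewrite /t; field; exact: o0'.
  have hq : q_norm le e (t *: k - 0) < del.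
    rewrite subr0; apply: le_lt_trans (qn_le_ou le e _) _; rewrite otk tod; lra.
  have := hdel _ Ltk hq; rewrite f0 subr0 (ft k t Lk t01) => h.
  have h' : t * (- f k) < eps.
    rewrite mulrN; apply: le_lt_trans h; by rewrite -normrN ler_norm.
  have hM : M * o = eps / t.
    have o0' : o != 0 by rewrite gt_eqF.
    have d0' : del != 0 by rewrite gt_eqF.
    rewrite /M /t; field; by rewrite o0' d0'.
  have : - f k < eps / t by rewrite ltr_pdivlMr // mulrC.
  lra.
pose P x := [set v : R | exists s k y, [/\ 0 <= s, L k <= 1, x = s *: k + y &
   v = s * (f k + eps) + M * ou_norm le e y]].
pose p x := inf (P x).
have Pn x : P x !=set0.
  exists (0 * (f 0 + eps) + M * ou_norm le e x); exists 0, 0, x; split => //.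
  by rewrite scale0r add0r.
have Pl x : has_lbound (P x).
  exists (- (M * ou_norm le e x)) => _ [s [k [y [s0 Lk -> ->]]]].
  have h1 : s * ou_norm le e k <= ou_norm le e (s *: k + y) + ou_norm le e y.
    rewrite -(sublin_eq _ _ ousl s0) -(ouNe y).
    by have := ouD (s *: k + y) (- y); rewrite addrK.
  have h2 : 0 <= s * (f k + eps + M * ou_norm le e k).
    by rewrite mulr_ge0 //; have := fb k Lk; lra.
  have h3 : s * (f k + eps + M * ou_norm le e k) =
     s * (f k + eps) + M * (s * ou_norm le e k) by ring.
  have h4 := ler_wpM2l M0 h1; rewrite mulrDr in h4.
  lra.
have pel x v : P x v -> p x <= v := fun h => ge_inf (Pl x) h.
have psl : sublin p.
  split.
    move=> x1 x2; apply: inf2 => // _ _ [s1 [k1 [y1 [s10 Lk1 -> ->]]]]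
      [s2 [k2 [y2 [s20 Lk2 -> ->]]]].
    have hy := ler_wpM2l M0 (ouD y1 y2); rewrite mulrDr in hy.
    have [s12|s12] := eqVneq (s1 + s2) 0.
      have s1z : s1 = 0 by lra.
      have s2z : s2 = 0 by lra.
      subst s1 s2.
      apply: le_trans (pel _ (0 * (f 0 + eps) + M * ou_norm le e (y1 + y2)) _) _.
        by exists 0, 0, (y1 + y2); split => //; rewrite !scale0r !add0r.
      rewrite !mul0r !add0r; lra.
    have sp : 0 < s1 + s2 by rewrite lt_neqAle eq_sym s12 addr_ge0.
    pose a := s1 / (s1 + s2).
    have ea : (s1 + s2) * a = s1 by rewrite /a mulrC divfK.
    have eb : (s1 + s2) * (1 - a) = s2 by rewrite mulrBr mulr1 ea; lra.
    have a01 : 0 <= a <= 1.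
      apply/andP; split; first by rewrite /a divr_ge0 // ltW.
      by rewrite /a ler_pdivrMr // mul1r; lra.
    pose k := a *: k1 + (1 - a) *: k2.
    apply: le_trans (pel _ ((s1 + s2) * (f k + eps) + M * ou_norm le e (y1 + y2)) _) _.
      exists (s1 + s2), k, (y1 + y2); split => //; first exact: ltW.
        exact: Lconv.
      rewrite /k scalerDr !scalerA ea eb.
      by rewrite addrACA.
    rewrite /k faff //.
    have h5 : (s1 + s2) * (a * f k1 + (1 - a) * f k2 + eps) =
      ((s1 + s2) * a) * f k1 + ((s1 + s2) * (1 - a)) * f k2 + (s1 + s2) * eps by ring.
    rewrite h5 ea eb !mulrDr mulrDl; lra.
  move=> s x s0; apply: inf_scal => // _ [s' [k [y [s'0 Lk -> ->]]]].
  apply: le_trans (pel _ ((s * s') * (f k + eps) + M * ou_norm le e (s *: y)) _) _.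
    exists (s * s'), k, (s *: y); split => //; first by rewrite mulr_ge0 // ltW.
    by rewrite scalerDr scalerA.
  have h : M * ou_norm le e (s *: y) <= s * (M * ou_norm le e y).
    by rewrite mulrCA; exact: (ler_wpM2l M0 (ouZ s y s0)).
  rewrite [s * (_ + _)]mulrDr mulrA; lra.
have [lam [lD lZ lp]] := hahn_banach _ psl.
have lN x : lam (- x) = - lam x by rewrite -scaleN1r lZ mulN1r.
have pK k : L k <= 1 -> p k <= f k + eps.
  move=> Lk; apply: le_trans (pel _ (1 * (f k + eps) + M * ou_norm le e 0) _) _.
    by exists 1, k, 0; split => //; rewrite scale1r addr0.
  by rewrite ou0 mulr0 addr0 mul1r.
have pM x : p x <= M * ou_norm le e x.
  apply: le_trans (pel _ (0 * (f 0 + eps) + M * ou_norm le e x) _) _.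
    by exists 0, 0, x; split => //; rewrite scale0r add0r.
  by rewrite mul0r add0r.
have pe c : p (c *: e) <= 0.
  have H eta : 0 < eta -> p (c *: e) <= eta.
    move=> eta0; pose s := eta / eps; pose t := c / s.
    have s0 : 0 < s by rewrite divr_gt0.
    apply: le_trans (pel _ (s * (f (t *: e) + eps) + M * ou_norm le e 0) _) _.
      exists s, (t *: e), 0; split => //.
      - exact: ltW.
      - by have [_ h] := Lker (t *: e); rewrite h //; exists t.
      - by rewrite addr0 scalerA /t mulrC divfK // gt_eqF.
    by rewrite fe ou0 mulr0 addr0 add0r /s divfK // gt_eqF.
  have [//|hgt] := leP (p (c *: e)) 0.
  have := H (p (c *: e) / 2) ltac:(by rewrite divr_gt0); lra.
have le0 : lam e = 0.
  have h1 := le_trans (lp _) (pe 1); rewrite scale1r in h1.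
  have h2 := le_trans (lp _) (pe (-1)); rewrite scaleN1r lN in h2.
  lra.
exists lam; split => //.
- split; first by move=> s a b; rewrite lD lZ.
  exists M => a; rewrite ler_norml; apply/andP; split.
    have := le_trans (lp _) (pM (- a)); rewrite lN ouNe; lra.
  exact: le_trans (lp _) (pM a).
- move=> a La; rewrite ler_norml; apply/andP; split.
    have := le_trans (lp _) (pK a La); lra.
  have := le_trans (lp _) (pK (- a) ltac:(by rewrite LN)); rewrite lN fN //; lra.
Qed.
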